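(* On every nondegenerate TNECP instance (and for every choice of $j^\star\in[n]$), the tropical Lemke--Howson algorithm terminates after a finite number of iterations with a fully labeled tropical basis $B$ distinct from $[n]\times\{\text{blue}\}$.
   Context: $\mathbb{T}=\mathbb{R}\cup\{-\infty\}$ with $\oplus=\max$, $\odot=+$. A TNECP instance is $M\in\mathbb{T}^{n\times n}$, $q\in\mathbb{T}^n$ with no all-$(-\infty)$ column in $M$ and no $-\infty$ entry in $q$; it is nondegenerate if for each $j\in[n]$ the minimum $\min_k(q_k-M_{kj})$ is attained by exactly one $k$ (convention $a-(-\infty)=+\infty$). Write $w\oplus M\odot z=q$ as $A\odot x=q$ with columns indexed by $[n]\uplus[n]:=([n]\times\{\text{blue}\})\cup([n]\times\{\text{red}\})$: column $(i,\text{blue})$ has $0$ in row $i$ and $-\infty$ elsewhere; column $(j,\text{red})$ is column $j$ of $M$. A tropical basis of $A\odot x=b$ ($A\in\mathbb{T}^{n\times d}$) is a set $B$ of $n$ column indices with a bijection $\phi:[n]\to B$ such that for each $i$, $b_i-A_{i\phi(i)}\in\mathbb{T}$ is minimal among $b_k-A_{k\phi(i)}$, $k\in[n]$. The label of $(k,c)$ is $k$; $(k,\text{blue})$ and $(k,\text{red})$ are twins; a basis is fully labeled if every label of $[n]$ appears in it. Tropical Lemke--Howson algorithm with parameter $j^\star\in[n]$: $B\leftarrow[n]\times\{\text{blue}\}$, $\gamma\leftarrow(j^\star,\text{red})$; loop: $B'\leftarrow$ the unique tropical basis contained in $B\cup\{\gamma\}$ and different from $B$; $\gamma\leftarrow$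 twin of the unique element of $B\setminus B'$; $B\leftarrow B'$; if $B$ is fully labeled, stop. *)

(* Defs.v *)
(* Tropical semiring T = R u {-oo}, encoded as [option R]
   with [None] = -oo and [Some x] = x. *)
From mathcomp Require Import all_boot all_order all_algebra.
Set Implicit Arguments. Unset Strict Implicit. Unset Printing Implicit Defensive.
Import Order.TTheory GRing.Theory Num.Theory.
Local Open Scope ring_scope.

Notation blue := false.
Notation red := true.

Notation colidx n := ('I_n * bool)%type.

(* The matrix A of the system  w (+) M (.) z = q  written as  A (.) x = q:
   column (i,blue) has 0 in row i and -oo elsewhere; column (j,red) is
   column j of M. *)
Definition tnecpA (R : realFieldType) (n : nat) (M : 'M[option R]_n)
    (k : 'I_n) (c : colidx n) : option R :=
  let: (j, col) := c in
  if col then M k j else (if k == j then Some 0 else None).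

(* [attains_min A b i c]: b_i - A_{i c} is finite (i.e. A_{i c} <> -oo)
   and is minimal among all b_k - A_{k c}, k in [n]
   (with the convention a - (-oo) = +oo). *)
Definition attains_min (R : realFieldType) (n : nat) (C : Type)
    (A : 'I_n -> C -> option R) (b : 'I_n -> R) (i : 'I_n) (c : C) : Prop :=
  exists a, A i c = Some a /\
    (forall (k : 'I_n) (a' : R), A k c = Some a' -> b i - a <= b k - a').

Definition trop_basis (R : realFieldType) (n : nat) (C : finType)
    (A : 'I_n -> C -> option R) (b : 'I_n -> R) (B : {set C}) : Prop :=
  #|B| = n /\
  exists phi : 'I_n -> C,
    [/\ injective phi, phi @: setT = B & forall i, attains_min A b i (phi i)].

Definition tnecp_nondegenerate (R : realFieldType) (n : nat) (M : 'M[option R]_n)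
    (q : 'I_n -> R) : Prop :=
  forall j : 'I_n, exists k : 'I_n,
    attains_min (fun k j => M k j) q k j /\
    (forall k', attains_min (fun k j => M k j) q k' j -> k' = k).

Definition no_neginf_column (R : realFieldType) (n : nat) (M : 'M[option R]_n)
  : Prop := forall j : 'I_n, exists k : 'I_n, M k j <> None.

Definition label n (c : colidx n) : 'I_n := c.1.
Definition twin n (c : colidx n) : colidx n := (c.1, ~~ c.2).
Definition fully_labeled n (B : {set colidx n}) : Prop :=
  forall l : 'I_n, exists c, c \in B /\ label c = l.

Definition blue_basis n : {set colidx n} := [set c | c.2 == blue].

Definition LH_step (R : realFieldType) (n : nat) (M : 'M[option R]_n)
    (q : 'I_n -> R) (B : {set colidx n}) (g : colidx n)
    (B' : {set colidx n}) (g' : colidx n) : Prop :=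
  [/\ trop_basis (tnecpA M) q B',
      B' \subset g |: B,
      B' != B,
      (forall B'', trop_basis (tnecpA M) q B'' -> B'' \subset g |: B ->
                   B'' != B -> B'' = B')
    & exists e, B :\: B' = [set e] /\ g' = twin e].

Definition LH_terminates_with (R : realFieldType) (n : nat)
    (M : 'M[option R]_n) (q : 'I_n -> R) (jstar : 'I_n) (T : nat)
    (Bs : nat -> {set colidx n}) (gs : nat -> colidx n) : Prop :=
  [/\ Bs 0%N = blue_basis n /\ gs 0%N = (jstar, red),
      (0 < T)%N,
      (forall t, (t < T)%N -> LH_step M q (Bs t) (gs t) (Bs t.+1) (gs t.+1)),
      (forall t, (0 < t < T)%N -> ~ fully_labeled (Bs t))
    & fully_labeled (Bs T)].

(* Main.v *)
Require Import Defs.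
From mathcomp Require Import all_boot all_order all_algebra.
From Stdlib Require Import Classical.
From mathcomp Require Import zify.
Set Implicit Arguments. Unset Strict Implicit. Unset Printing Implicit Defensive.

Definition isB n (r : colidx n -> 'I_n) (B : {set colidx n}) : Prop :=
  (forall k, exists c, c \in B /\ r c = k) /\
  (forall c c', c \in B -> c' \in B -> r c = r c' -> c = c').

Definition elt n (r : colidx n -> 'I_n) (B : {set colidx n}) (k : 'I_n) : colidx n :=
  odflt (k, false) [pick c in B | r c == k].

Lemma eltP n r B k : @isB n r B -> elt r B k \in B /\ r (elt r B k) = k.
Proof.
move=> [ex _]; rewrite /elt; case: pickP => [c /andP[cB /eqP rc]|H] //=.
have [c [cB rc]] := ex k. by move: (H c); rewrite /= cB rc eqxx.
Qed.

Lemma elt_uniq n r B c : @isB n r B -> c \in B -> c = elt r B (r c).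
Proof.
move=> hB cB; have [eB er] := eltP (r c) hB; case: hB => _ u.
exact: u cB eB (esym er).
Qed.

Lemma isB_card n r B : @isB n r B -> #|B| = n.
Proof.
move=> hB; have [ex u] := hB.
rewrite -(card_in_imset (f:=r)); last by move=> x y xB yB; exact: u.
have -> : r @: B = setT.
  apply/setP=> k; rewrite inE; apply/imsetP; have [c [cB rc]] := ex k; by exists c.
by rewrite cardsT card_ord.
Qed.

Definition Fst n (r : colidx n -> 'I_n) (s : {set colidx n} * colidx n) :=
  let e := elt r s.1 (r s.2) in (s.2 |: (s.1 :\ e), twin e).
Definition rho n (s : {set colidx n} * colidx n) := (s.1, twin s.2).

Lemma twinK n : involutive (@twin n).
Proof. by case=> l b; rewrite /twin /= negbK. Qed.

Lemma twin_neq n (c : colidx n) : twin c != c.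
Proof. case: c => l b; rewrite /twin /= xpair_eqE eqxx /=; by case: b. Qed.

Lemma rhoK n : involutive (@rho n).
Proof. by case=> B g; rewrite /rho /= twinK. Qed.

Lemma memB' n (B : {set colidx n}) g e c : g \notin B -> e \in B ->
  (c \in g |: (B :\ e)) = (c \in g |: B) && (c != e).
Proof.
move=> gB eB; have eg : e != g by apply: contraNneq gB => <-.
rewrite !inE; case: (eqVneq c e) => [->|ce]; last by rewrite andbT.
by rewrite (negbTE eg) andbF.
Qed.

Lemma step_basis n r B g : @isB n r B -> g \notin B ->
  isB r (g |: (B :\ elt r B (r g))).
Proof.
move=> hB gB; have [ex u] := hB; set e := elt r B (r g).
have [eB re] : e \in B /\ r e = r g := eltP _ hB.
split.
- move=> k; case: (eqVneq k (r g)) => [->|kg].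
  + exists g; by rewrite setU11.
  + have [c [cB rc]] := ex k; exists c; split=> //.
    rewrite memB' // inE cB orbT /=; apply/eqP=> ce.
    by move: kg; rewrite -rc ce re eqxx.
- move=> c c'; rewrite !inE => /orP[/eqP->|/andP[ce cB]] /orP[/eqP->|/andP[c'e c'B]] //.
  + move=> h; have := u _ _ eB c'B (etrans re h) => ec'.
    by move: c'e; rewrite -ec' eqxx.
  + move=> h; have := u _ _ cB eB (etrans h (esym re)) => ce'.
    by move: ce; rewrite ce' eqxx.
  + exact: u.
Qed.

Lemma step_uniq n r B g B'' : @isB n r B -> g \notin B -> isB r B'' ->
  B'' \subset g |: B -> B'' != B -> B'' = g |: (B :\ elt r B (r g)).
Proof.
move=> hB gB hB'' sub neq; set e := elt r B (r g).
have [eB re] : e \in B /\ r e = r g := eltP _ hB.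
have gB'' : g \in B''.
  apply: contraNT neq => gN; apply/eqP/setP/subset_cardP.
    by rewrite (isB_card hB) (isB_card hB'').
  apply/subsetP=> c cB''; case/setU1P: (subsetP sub c cB'') => [ce|//].
  by move: gN; rewrite -ce cB''.
have eN : e \notin B''.
  apply/negP=> eB''; have [_ u''] := hB''; have eg := u'' _ _ eB'' gB'' re.
  by move: gB; rewrite -eg eB.
apply/setP/subset_cardP.
  by rewrite (isB_card hB'') (isB_card (step_basis hB gB)).
apply/subsetP=> c cB''; rewrite memB' // (subsetP sub c cB'') /=.
by apply/eqP=> ce; move: eN; rewrite -ce cB''.
Qed.

Lemma step_diff n r B g : @isB n r B -> g \notin B ->
  B :\: (g |: (B :\ elt r B (r g))) = [set elt r B (r g)].
Proof.
move=> hB gB; have [eB re] := eltP (r g) hB.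
apply/setP=> c; rewrite inE memB' // inE [in RHS]inE.
case: (eqVneq c (elt r B (r g))) => [->|ce]; rewrite ?eB ?andbT ?andbF //=.
by case: (c \in B); rewrite ?orbT ?andbF.
Qed.

Lemma step_rev n r B g : @isB n r B -> g \notin B ->
  Fst r (rho (Fst r (B, g))) = rho (B, g).
Proof.
move=> hB gB; have [eB re] := eltP (r g) hB.
rewrite /Fst /rho /= twinK.
set e := elt r B (r g).
have hB' := step_basis hB gB.
have -> : elt r (g |: (B :\ e)) (r e) = g.
  by rewrite re -(elt_uniq hB') // setU11.
congr (_, _); apply/setP=> c; rewrite !inE.
case: (eqVneq c e) => [->|ce] /=; first by symmetry; exact: eB.
by case: (eqVneq c g) => [->|cg] /=; rewrite ?(negbTE gB).
Qed.

Definition good n (j : 'I_n) (S : {set colidx n}) : Prop :=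
  [/\ forall l c, ((l,c) \in S) || ((l, ~~c) \in S),
      forall l, (l,false) \in S -> (l,true) \in S -> l = j,
      (j,false) \in S & (j,true) \in S].

Definition Inv n r (j : 'I_n) (s : {set colidx n} * colidx n) :=
  [/\ @isB n r s.1, s.2 \notin s.1 & good j (s.2 |: s.1)].

Lemma good_pair n j S (x y : colidx n) : @good n j S -> x \in S -> y \in S ->
  x.1 = y.1 -> x != y -> x.1 = j.
Proof.
case=> _ h2 _ _; case: x => l a; case: y => l' b /= xS yS ell'.
rewrite -ell' in yS *; rewrite xpair_eqE eqxx /=.
by case: a xS; case: b yS => //= yS xS _; apply: h2.
Qed.

Definition flb n (B : {set colidx n}) := [forall l : 'I_n, [exists c in B, c.1 == l]].

Lemma flP n (B : {set colidx n}) : reflect (fully_labeled B) (flb B).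
Proof.
apply: (iffP forallP) => [h l|h l].
  by have /existsP[c /andP[cB /eqP cl]] := h l; exists c.
by have [c [cB cl]] := h l; apply/existsP; exists c; rewrite cB /= -cl /label.
Qed.

Lemma inv_fl n r j (s : {set colidx n} * colidx n) : Inv r j s ->
  flb (Fst r s).1 = ((elt r s.1 (r s.2)).1 == j).
Proof.
case: s => B g [hB gB hg] /=; have [eB re] := eltP (r g) hB.
set e := elt r B (r g).
apply/flP/eqP => [fl|ej].
  have [c [cB ce]] := fl e.1; move: cB; rewrite memB' // => /andP[cS cne].
  have eS : e \in g |: B by rewrite inE eB orbT.
  by rewrite -ce; exact: (good_pair hg cS eS ce cne).
move=> l; case: (eqVneq l j) => [->|lj].
  exists (twin e); rewrite memB' // twin_neq andbT; split; last by rewrite /label /twin /= ej.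
  case: hg => _ _ h3 h4; case: e ej {re} => l0 [] /= ->; rewrite /twin //=.
case: hg => h1 _ _ _; have := h1 l false; case/orP => hS.
  exists (l,false); rewrite memB' // hS; split=> //=.
  by apply/eqP=> le; move: lj; rewrite -ej -le /= eqxx.
exists (l,true); rewrite memB' // hS; split=> //=.
by apply/eqP=> le; move: lj; rewrite -ej -le /= eqxx.
Qed.

Lemma inv_step n r j (s : {set colidx n} * colidx n) : Inv r j s ->
  (elt r s.1 (r s.2)).1 != j -> Inv r j (Fst r s).
Proof.
case: s => B g [hB gB hg] /=; have [eB re] := eltP (r g) hB.
set e := elt r B (r g) => ej.
have eS : e \in g |: B by rewrite inE eB orbT.
have tS : twin e \notin g |: B.
  apply/negP=> tS; have := good_pair hg tS eS erefl (twin_neq e).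
  by move=> h; move: ej; rewrite -h eqxx.
have memS' c : (c \in twin e |: (g |: (B :\ e))) = (c == twin e) || ((c \in g |: B) && (c != e)).
  by rewrite in_setU1 memB'.
split=> /=.
- exact: step_basis.
- by rewrite memB' // negb_and (negbTE tS).
case: hg => h1 h2 h3 h4; split.
- move=> l c; rewrite !memS'.
  case: (eqVneq (l,c) e) => [lce|lce].
    by rewrite -lce /twin /= eqxx orbT.
  case: (eqVneq (l,~~c) e) => [lce'|lce'].
    by rewrite -lce' /twin /= negbK eqxx.
  rewrite !andbT; by case/orP: (h1 l c) => ->; rewrite ?orbT.
- move=> l; rewrite !memS'.
  case: (eqVneq (l,false) (twin e)) => [lt|lt] /=.
    have ee : e = (l,true) by rewrite -(twinK e) -lt.
    by move=> _; rewrite ee /twin /= !xpair_eqE !eqxx /= ?andbF.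
  case: (eqVneq (l,true) (twin e)) => [lt'|lt'] /=.
    have ee : e = (l,false) by rewrite -(twinK e) -lt'.
    by rewrite ee /twin /= !xpair_eqE !eqxx /= ?andbF.
  by move=> /andP[a _] /andP[b _]; apply: h2.
- rewrite memS' h3 /=; apply/orP; right; apply/eqP=> je; move: ej; by rewrite -je eqxx.
- rewrite memS' h4 /=; apply/orP; right; apply/eqP=> je; move: ej; by rewrite -je eqxx.
Qed.

Lemma inv0 n r (j : 'I_n) : (forall i, r (i,false) = i) -> Inv r j (blue_basis n, (j,true)).
Proof.
move=> rb; split=> /=.
- split=> [k|c c']; first by exists (k,false); rewrite inE rb.
  case: c => l a; case: c' => l' b; rewrite !inE /= => /eqP-> /eqP->.
  by rewrite !rb => ->.
- by rewrite inE.
- split.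
  + by move=> l [|]; rewrite !inE /= ?orbT.
  + by move=> l _; rewrite !inE /= orbF xpair_eqE andbT => /eqP.
  + by rewrite /blue_basis !inE eqxx orbT.
  + by rewrite /blue_basis !inE eqxx.
Qed.

Lemma fl_blue n : flb (blue_basis n).
Proof. by apply/flP=> l; exists (l,false); rewrite inE. Qed.

Lemma pigeon (T : finType) (f : nat -> T) : exists i j, (i < j)%N /\ f i = f j.
Proof.
pose g (x : 'I_#|T|.+1) := f x.
case: (boolP (injectiveb g)) => [/injectiveP inj|/injectivePn [x [y xy gxy]]].
  by have := leq_card _ inj; rewrite card_ord ltnn.
case: (ltngtP x y) => [lt|gt|eq].
- by exists x, y.
- by exists y, x.
- by move: xy; rewrite (val_inj eq) eqxx.
Qed.

Lemma tb_isB (R : realFieldType) n (A : 'I_n -> colidx n -> option R) q r :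
  (forall k c, attains_min A q k c <-> k = r c) ->
  forall B, trop_basis A q B <-> isB r B.
Proof.
move=> rs B; split.
  move=> [_ [phi [inj img am]]].
  have rphi i : r (phi i) = i by apply/esym/rs.
  split=> [k|c c'].
    by exists (phi k); rewrite -img imset_f ?inE.
  rewrite -img => /imsetP[i _ ->] /imsetP[i' _ ->]; by rewrite !rphi => ->.
move=> hB; split; first exact: isB_card hB.
exists (elt r B); split.
- by move=> x y exy; rewrite -(proj2 (eltP x hB)) -(proj2 (eltP y hB)) exy.
- apply/setP=> c; apply/imsetP/idP => [[i _ ->]|cB]; first exact: (proj1 (eltP i hB)).
  by exists (r c); rewrite ?inE // -(elt_uniq hB cB).
- by move=> i; apply/rs; rewrite (proj2 (eltP i hB)).
Qed.

Lemma step_ok (R : realFieldType) n (M : 'M[option R]_n) q r B g :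
  (forall B, trop_basis (tnecpA M) q B <-> isB r B) ->
  isB r B -> g \notin B ->
  LH_step M q B g (Fst r (B,g)).1 (Fst r (B,g)).2.
Proof.
move=> tb hB gB; have [eB re] := eltP (r g) hB; rewrite /Fst /=.
split.
- by apply/tb; apply: step_basis.
- by apply/subsetP=> c; rewrite memB' // => /andP[].
- apply/eqP=> e; move: gB; by rewrite -e setU11.
- move=> B'' /tb hB'' sub neq; exact: step_uniq.
- by exists (elt r B (r g)); rewrite step_diff.
Qed.

Definition run n (r : colidx n -> 'I_n) (j : 'I_n) (t : nat) :=
  iter t (Fst r) (blue_basis n, (j,true)).

Lemma main_comb (R : realFieldType) n (M : 'M[option R]_n) q r (jstar : 'I_n) :
  (forall B, trop_basis (tnecpA M) q B <-> isB r B) ->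
  (forall i, r (i,false) = i) ->
  exists (T : nat) (Bs : nat -> {set colidx n}) (gs : nat -> colidx n),
    LH_terminates_with M q jstar T Bs gs /\
    trop_basis (tnecpA M) q (Bs T) /\
    fully_labeled (Bs T) /\ Bs T != blue_basis n.
Proof.
move=> tb rb.
pose s := run r jstar.
have s0 : s 0 = (blue_basis n, (jstar,true)) by [].
have sS t : s t.+1 = Fst r (s t) by [].
have I0 : Inv r jstar (s 0) by rewrite s0; exact: inv0.
have IS t : Inv r jstar (s t) -> ~~ flb (s t.+1).1 -> Inv r jstar (s t.+1).
  move=> It nf; rewrite sS; apply: inv_step (It) _; by rewrite -(inv_fl It) -sS.
have hrev t : Inv r jstar (s t) -> Fst r (rho (s t.+1)) = rho (s t).
  rewrite sS; case: (s t) => B g [hB gB _]; exact: step_rev.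
have hex : exists t, (0 < t) && flb (s t).1.
  apply: NNPP => Hno.
  have Hn t : 0 < t -> ~~ flb (s t).1.
    move=> tp; apply/negP=> f; apply: Hno; exists t; by rewrite tp f.
  have Iall t : Inv r jstar (s t).
    elim: t => // t IH; exact: IS t IH (Hn _ (ltn0Sn t)).
  have [i [j [ij sij]]] := pigeon s.
  have key : forall i d, s i = s (i + d.+1) -> False.
    elim=> [|i' IH] d.
      rewrite add0n => e; have := Hn d.+1 (ltn0Sn d); rewrite -e s0 /=.
      by rewrite fl_blue.
    move=> e; apply: (IH d).
    apply: (can_inj (@rhoK n)).
    by rewrite -(hrev _ (Iall i')) -(hrev _ (Iall (i' + d.+1))) -addSn e.
  apply: (key i (j - i.+1)); by rewrite addnS -addSn subnKC.
have [T /andP[T0 flT] Tmin] := ex_minnP hex.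
have IT : forall t, t < T -> Inv r jstar (s t).
  elim=> [_|t IH tT]; first exact: I0.
  apply: IS (IH (ltnW tT)) _.
  apply/negP=> f; have := Tmin t.+1; rewrite ltn0Sn f => /(_ isT).
  by rewrite leqNgt tT.
have Bnext t : t < T -> isB r (s t.+1).1.
  move=> tT; have := IT t tT; rewrite sS; case: (s t) => B g [hB gB _].
  exact: step_basis.
exists T, (fun t => (s t).1), (fun t => (s t).2).
have TT : T = T.-1.+1 by rewrite prednK.
split; last split; last split.
- split.
  + by split.
  + exact: T0.
  + move=> t tT; have := IT t tT; rewrite sS; case: (s t) => B g [hB gB _].
    exact: step_ok.
  + move=> t /andP[t0 tT] /flP f; have := Tmin t; rewrite t0 f => /(_ isT).
    by rewrite leqNgt tT.
  + exact/flP.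
- by apply/tb; rewrite TT; apply: Bnext; rewrite -TT.
- exact/flP.
apply/eqP => TB.
have IT1 : Inv r jstar (s T.-1) by apply: IT; rewrite {2}TT.
have sTe : rho (s T) = s 0.
  move: flT TB; rewrite TT sS; move: IT1; case: (s T.-1) => B g IT1.
  have [hB gB _] := IT1; have [eB _] := eltP (r g) hB.
  rewrite (inv_fl IT1) /= => /eqP ej TB.
  rewrite ?s0 /rho /Fst /= twinK TB; congr (_, _).
  have eN : elt r B (r g) \notin g |: (B :\ elt r B (r g)) by rewrite memB' // eqxx andbF.
  move: eN ej; rewrite TB; case: (elt r B (r g)) => l [] /= eN -> //.
  by move: eN; rewrite /blue_basis inE.
have pal : forall t, t <= T -> s t = rho (s (T - t)).
  elim=> [_|t IH tT]; first by rewrite subn0 -sTe.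
  rewrite sS IH ?(ltnW tT) // -(subnSK tT) hrev //; apply: IT.
  by lia.
have := odd_double_half T; rewrite -addnn; set m := T./2 => hT.
case: (boolP (odd T)) => oT; [rewrite oT in hT | rewrite (negbTE oT) in hT].
- have e : s m = rho (s (T - m)) by apply: pal; lia.
  rewrite (_ : T - m = m.+1) in e; last by lia.
  have [hB gB _] : Inv r jstar (s m) by apply: IT; lia.
  have e1 : (s m).1 = (s m.+1).1 by rewrite {1}e.
  move: e1; rewrite sS; case: (s m) hB gB => B g hB gB /= E.
  have : g \in B by rewrite E setU11.
  by rewrite (negbTE gB).
- have e : s m = rho (s (T - m)) by apply: pal; lia.
  rewrite (_ : T - m = m) in e; last by lia.
  by have := twin_neq (s m).2; rewrite {2}e /= eqxx.
Qed.

Unset Implicit Arguments.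
Local Open Scope ring_scope.

Theorem proposition5p1 (R : realFieldType) (n : nat) (M : 'M[option R]_n)
    (q : 'I_n -> R) :
  no_neginf_column M -> tnecp_nondegenerate M q ->
  forall jstar : 'I_n,
  exists (T : nat) (Bs : nat -> {set colidx n}) (gs : nat -> colidx n),
    LH_terminates_with M q jstar T Bs gs /\
    trop_basis (tnecpA M) q (Bs T) /\
    fully_labeled (Bs T) /\ Bs T != blue_basis n.
Proof.
move=> _ nd jstar.
have H : forall c : colidx n, exists k : 'I_n,
    attains_min (tnecpA M) q k c /\
    (forall k', attains_min (tnecpA M) q k' c -> k' = k).
  move=> -[j [|]].
  - have [k [hk uk]] := nd j.
    by exists k; split; [exact: hk | move=> k' h; exact: uk].
  - exists j; split.
      exists 0; split; first by rewrite /tnecpA eqxx.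
      move=> k a'; rewrite /tnecpA; case: eqP => [-> [<-]|] //.
    move=> k' [a [ha _]]; move: ha; rewrite /tnecpA; by case: eqP.
have [r rP] := fin_all_exists H.
have rs : forall k c, attains_min (tnecpA M) q k c <-> k = r c.
  move=> k c; split; first exact: (proj2 (rP c)).
  by move=> ->; exact: (proj1 (rP c)).
have rb : forall i, r (i,false) = i.
  move=> i; have [[a [ha _]] _] := rP (i,false); move: ha; rewrite /tnecpA.
  by case: eqP.
exact: main_comb (tb_isB rs) rb.
Qed.
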